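(* Let $0<q<1$, $\alpha>-1$ and let $n\ge0$ be an integer. The matrix $\left((q^{\alpha+1};q)_{j+k}\,q^{-\binom{j+k+1}{2}-\alpha(j+k)}\right)_{j,k=0}^{n}$ is invertible and its inverse is $(\gamma_{j,k})_{j,k=0}^n$ with \[ \gamma_{j,k}=\sum_{m=0}^{n}\frac{(q^{\alpha+1};q)_m\,q^{m(j+k+1)}\,(q^{-m};q)_j\,(q^{-m};q)_k\,q^{\alpha(j+k)+\binom{j+1}{2}+\binom{k+1}{2}}}{(q;q)_m\,(q;q)_j\,(q;q)_k\,(q^{\alpha+1};q)_j\,(q^{\alpha+1};q)_k}. \]
   Context: $(a;q)_m=\prod_{i=0}^{m-1}(1-aq^i)$ for integers $m\ge0$ (empty product $=1$); in particular $(q^{-m};q)_j=0$ for $j>m$. *)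

(* Defs.v *)
From Stdlib Require Import Reals.
Open Scope R_scope.

Fixpoint qpoch (a q : R) (m : nat) : R :=
  match m with
  | O => 1
  | S m' => qpoch a q m' * (1 - a * q ^ m')
  end.

Definition binom2 (N : nat) : R := INR N * (INR N - 1) / 2.

Definition Amat (q alpha : R) (j k : nat) : R :=
  qpoch (Rpower q (alpha + 1)) q (j + k)
  * Rpower q (- binom2 (j + k + 1) - alpha * INR (j + k)).

Definition gamma (q alpha : R) (n j k : nat) : R :=
  sum_f_R0 (fun m =>
    qpoch (Rpower q (alpha + 1)) q m * q ^ (m * (j + k + 1))
    * qpoch (/ q ^ m) q j * qpoch (/ q ^ m) q k
    * Rpower q (alpha * INR (j + k) + binom2 (j + 1) + binom2 (k + 1))
    / (qpoch q q m * qpoch q q j * qpoch q q k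
       * qpoch (Rpower q (alpha + 1)) q j * qpoch (Rpower q (alpha + 1)) q k)) n.

(* product of (n+1)x(n+1) matrices indexed 0..n *)
Definition matmul (n : nat) (A B : nat -> nat -> R) (j k : nat) : R :=
  sum_f_R0 (fun l => A j l * B l k) n.

Definition idm (j k : nat) : R := if Nat.eqb j k then 1 else 0.

(* Main.v *)
Require Import Defs.
From Stdlib Require Import Reals Lra Lia.
Open Scope R_scope.

Lemma sum_zero (f : nat -> R) N : (forall i, (i <= N)%nat -> f i = 0) -> sum_f_R0 f N = 0.
Proof.
  induction N; intros H; simpl.
  - apply H; lia.
  - rewrite IHN by (intros; apply H; lia). rewrite H by lia. ring.
Qed.

Lemma sum_single (f : nat -> R) N p : (p <= N)%nat ->
  (forall i, (i <= N)%nat -> i <> p -> f i = 0) -> sum_f_R0 f N = f p.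
Proof.
  induction N; intros Hp H; simpl.
  - replace p with 0%nat by lia. reflexivity.
  - destruct (Nat.eq_dec p (S N)) as [->|Hne].
    + rewrite sum_zero by (intros; apply H; lia). ring.
    + rewrite IHN by (try lia; intros; apply H; lia). rewrite (H (S N)) by lia. ring.
Qed.

Lemma sum_trunc (f : nat -> R) N m : (m <= N)%nat ->
  (forall i, (m < i <= N)%nat -> f i = 0) -> sum_f_R0 f N = sum_f_R0 f m.
Proof.
  induction N; intros Hm H.
  - replace m with 0%nat by lia. reflexivity.
  - destruct (Nat.eq_dec m (S N)) as [->|Hne]; [reflexivity|].
    simpl. rewrite IHN by (try lia; intros; apply H; lia). rewrite (H (S N)) by lia. ring.
Qed.

Lemma sum_swap (f : nat -> nat -> R) N M :
  sum_f_R0 (fun i => sum_f_R0 (fun k => f i k) M) N =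
  sum_f_R0 (fun k => sum_f_R0 (fun i => f i k) N) M.
Proof.
  induction N; simpl.
  - reflexivity.
  - rewrite IHN. rewrite <- plus_sum. reflexivity.
Qed.

Lemma sum_mult_l (f : nat -> R) c N : c * sum_f_R0 f N = sum_f_R0 (fun i => c * f i) N.
Proof. induction N; simpl; [ring|]. rewrite <- IHN. ring. Qed.

Lemma qpoch_shift a q l : qpoch a q (S l) = (1 - a) * qpoch (a * q) q l.
Proof.
  induction l.
  - simpl. ring.
  - change (qpoch a q (S (S l))) with (qpoch a q (S l) * (1 - a * q ^ (S l))).
    rewrite IHl. simpl. ring.
Qed.

Lemma qpoch_add a q l j : qpoch a q (l + j) = qpoch a q l * qpoch (a * q ^ l) q j.
Proof.
  induction j.
  - rewrite Nat.add_0_r. simpl. ring.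
  - rewrite Nat.add_succ_r. simpl. rewrite IHj, pow_add. ring.
Qed.

Lemma qpoch_zero a q l t : (t < l)%nat -> a * q ^ t = 1 -> qpoch a q l = 0.
Proof.
  induction l; intros Ht H; [lia|].
  simpl. destruct (Nat.eq_dec t l) as [->|Hne].
  - rewrite H. ring.
  - rewrite IHl by (auto; lia). ring.
Qed.

Lemma pow_le1 q i : 0 <= q -> q <= 1 -> q ^ i <= 1.
Proof.
  intros H0 H1. induction i; simpl; [lra|].
  assert (0 <= q ^ i) by (apply pow_le; lra). nra.
Qed.

Lemma qpoch_pos a q l : 0 <= q -> q <= 1 -> 0 < a -> a < 1 -> 0 < qpoch a q l.
Proof.
  intros. induction l; simpl; [lra|].
  assert (q ^ l <= 1) by (apply pow_le1; lra).
  assert (0 <= q ^ l) by (apply pow_le; lra).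
  apply Rmult_lt_0_compat; [auto| nra].
Qed.

Definition w (q : R) (m l : nat) : R := qpoch (/ q ^ m) q l * q ^ (m * l) / qpoch q q l.

Lemma w0 q m : w q m 0 = 1.
Proof. unfold w. rewrite Nat.mul_0_r. simpl. field. Qed.

Lemma wrec q m l : 0 < q -> q < 1 ->
  w q (S m) (S l) = q ^ (S l) * w q m (S l) - q ^ l * w q m l.
Proof.
  intros H0 H1. unfold w.
  assert (HQ : 0 < qpoch q q l) by (apply qpoch_pos; lra).
  assert (Hl : 0 < q ^ l) by (apply pow_lt; lra).
  assert (Hm : 0 < q ^ m) by (apply pow_lt; lra).
  assert (H2 : 0 < 1 - q * q ^ l).
  { assert (q ^ l <= 1) by (apply pow_le1; lra). nra. }
  rewrite (qpoch_shift (/ q ^ S m)).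
  replace (/ q ^ S m * q) with (/ q ^ m) by (simpl; field; lra).
  change (qpoch (/ q ^ m) q (S l)) with (qpoch (/ q ^ m) q l * (1 - / q ^ m * q ^ l)).
  change (qpoch q q (S l)) with (qpoch q q l * (1 - q * q ^ l)).
  replace (S m * S l)%nat with (m * l + m + l + 1)%nat by lia.
  replace (m * S l)%nat with (m * l + m)%nat by lia.
  rewrite !pow_add. simpl.
  field. repeat split; lra.
Qed.

Lemma w_zero q m l : 0 < q -> (m < l)%nat -> w q m l = 0.
Proof.
  intros H0 H. unfold w. rewrite (qpoch_zero _ q l m H). unfold Rdiv. ring.
  field. apply pow_nonzero. lra.
Qed.

Definition Sig (q : R) (m : nat) (f : nat -> R) : R :=
  sum_f_R0 (fun l => w q m l * f l) m.

Lemma Sig_rec q m f : 0 < q -> q < 1 ->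
  Sig q (S m) f = Sig q m (fun l => q ^ l * (f l - f (S l))).
Proof.
  intros H0 H1. unfold Sig.
  rewrite decomp_sum by lia. simpl Init.Nat.pred.
  rewrite w0.
  rewrite (sum_eq _ (fun i => q ^ S i * w q m (S i) * f (S i) - q ^ i * w q m i * f (S i)))
    by (intros; rewrite wrec by lra; ring).
  rewrite minus_sum.
  assert (E : sum_f_R0 (fun i => q ^ S i * w q m (S i) * f (S i)) m
            = sum_f_R0 (fun i => q ^ i * w q m i * f i) m - 1 * f 0%nat).
  { assert (E2 : sum_f_R0 (fun i => q ^ i * w q m i * f i) (S m)
               = q ^ 0 * w q m 0 * f 0%nat + sum_f_R0 (fun i => q ^ S i * w q m (S i) * f (S i)) m).
    { rewrite decomp_sum by lia. reflexivity. }
    simpl in E2. rewrite w_zero in E2 by (lra || lia). rewrite w0 in E2. simpl. lra. }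
  rewrite E.
  rewrite (sum_eq (fun l => w q m l * (q ^ l * (f l - f (S l))))
     (fun l => q ^ l * w q m l * f l - q ^ l * w q m l * f (S l))) by (intros; ring).
  rewrite minus_sum. ring.
Qed.

Fixpoint isPL (q : R) (d : nat) (lc : R) (f : nat -> R) : Prop :=
  match d with
  | O => forall l, f l = lc
  | S d' => exists c h, isPL q d' lc h /\ forall l, f l = c + / q ^ l * h l
  end.

Lemma PL_S_intro q d lc f c h : isPL q d lc h -> (forall l, f l = c + / q ^ l * h l) -> isPL q (S d) lc f.
Proof. intros; simpl; exists c, h; auto. Qed.

Lemma PL_ext q d lc f g : isPL q d lc f -> (forall l, g l = f l) -> isPL q d lc g.
Proof.
  destruct d; simpl; intros H E.
  - intros l. rewrite E. apply H.
  - destruct H as [c [h [Hh Hf]]]. exists c, h. split; auto. intros l. rewrite E. apply Hf.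
Qed.

Lemma PL_lceq q d lc lc' f : isPL q d lc f -> lc' = lc -> isPL q d lc' f.
Proof. intros H ->; exact H. Qed.

Lemma PL_lin q d l1 l2 f g a b : isPL q d l1 f -> isPL q d l2 g ->
  isPL q d (a * l1 + b * l2) (fun l => a * f l + b * g l).
Proof.
  revert f g. induction d; simpl; intros f g Hf Hg.
  - intros l. rewrite Hf, Hg. ring.
  - destruct Hf as [c1 [h1 [Hh1 Hf]]]. destruct Hg as [c2 [h2 [Hh2 Hg]]].
    exists (a * c1 + b * c2), (fun l => a * h1 l + b * h2 l). split.
    + apply IHd; auto.
    + intros l. rewrite Hf, Hg. ring.
Qed.

Lemma PL_zero q d : isPL q d 0 (fun _ => 0).
Proof.
  induction d; simpl.
  - auto.
  - exists 0, (fun _ => 0). split; auto. intros; ring.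
Qed.

Lemma PL_const q d c : isPL q (S d) 0 (fun _ => c).
Proof. simpl. exists c, (fun _ => 0). split; [apply PL_zero|]. intros; ring. Qed.

Lemma PL_shift q d lc f : 0 < q -> isPL q d lc f -> isPL q d (lc * (/ q) ^ d) (fun l => f (S l)).
Proof.
  intros Hq. revert lc f. induction d; simpl; intros lc f Hf.
  - intros l. rewrite Hf. ring.
  - destruct Hf as [c [h [Hh Hf]]].
    exists c, (fun l => / q * h (S l) + 0 * h (S l)). split.
    + apply PL_lceq with (/ q * (lc * (/ q) ^ d) + 0 * (lc * (/ q) ^ d)).
      * apply PL_lin; apply IHd; auto.
      * ring.
    + intros l. rewrite Hf. simpl. field. assert (q ^ l <> 0) by (apply pow_nonzero; lra). split; lra.
Qed.

Lemma PL_D q d lc f : 0 < q -> isPL q (S d) lc f ->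
  isPL q d (lc * (1 - (/ q) ^ (S d))) (fun l => q ^ l * (f l - f (S l))).
Proof.
  intros Hq Hf. simpl in Hf. destruct Hf as [c [h [Hh Hf]]].
  apply PL_ext with (fun l => 1 * h l + (- / q) * h (S l)).
  - apply PL_lceq with (1 * lc + (- / q) * (lc * (/ q) ^ d)).
    + apply PL_lin; auto. apply PL_shift; auto.
    + simpl. ring.
  - intros l. rewrite !Hf. simpl. field. assert (q ^ l <> 0) by (apply pow_nonzero; lra). split; lra.
Qed.

Lemma PL_mul q d lc h c : isPL q d lc h -> isPL q (S d) lc (fun l => h l * (/ q ^ l - c)).
Proof.
  revert lc h c. induction d; intros lc h c Hh.
  - simpl in Hh. simpl. exists (- c * lc), (fun _ => lc). split; [auto|].
    intros l. rewrite Hh. ring.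
  - simpl in Hh. destruct Hh as [c0 [h' [Hh' Hh]]].
    apply (PL_S_intro _ _ _ _ (- c * c0) (fun l => 1 * c0 + 1 * (h' l * (/ q ^ l - c)))).
    + apply PL_lceq with (1 * 0 + 1 * lc).
      * apply PL_lin; [apply PL_const | apply IHd; auto].
      * ring.
    + intros l. rewrite Hh. ring.
Qed.

Lemma PL_lift q d lc f : isPL q d lc f -> isPL q (S d) 0 f.
Proof.
  revert lc f. induction d; intros lc f Hf.
  - simpl in Hf. simpl. exists lc, (fun _ => 0). split; auto. intros l. rewrite Hf. ring.
  - destruct Hf as [c [h [Hh Hf]]]. apply (PL_S_intro _ _ _ _ c h); auto.
    eapply IHd; eauto.
Qed.

Lemma PL_lift_le q d m lc f : isPL q d lc f -> (d < m)%nat -> isPL q m 0 f.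
Proof.
  intros Hf. induction m; intros Hm; [lia|].
  destruct (Nat.eq_dec d m) as [->|Hne].
  - eapply PL_lift; eauto.
  - eapply PL_lift. apply IHm. lia.
Qed.

Lemma Sig_val q m lc f : 0 < q -> q < 1 -> isPL q m lc f -> Sig q m f = lc * qpoch (/ q) (/ q) m.
Proof.
  intros H0 H1. revert lc f. induction m; intros lc f Hf.
  - unfold Sig. simpl. rewrite w0. simpl in Hf. rewrite Hf. ring.
  - rewrite Sig_rec by lra. rewrite (IHm _ _ (PL_D q m lc f H0 Hf)).
    simpl. ring.
Qed.

Lemma Sig_zero q d m lc f : 0 < q -> q < 1 -> isPL q d lc f -> (d < m)%nat -> Sig q m f = 0.
Proof.
  intros H0 H1 Hf Hm. rewrite (Sig_val q m 0 f); auto. ring.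
  eapply PL_lift_le; eauto.
Qed.

Definition fj (q a : R) (j l : nat) : R := qpoch (a * q ^ l) q j * (/ q ^ l) ^ j.

Lemma fj_PL q a j : 0 < q -> isPL q j 1 (fj q a j).
Proof.
  intros Hq. induction j.
  - simpl. intros l. unfold fj. simpl. ring.
  - apply PL_ext with (fun l => fj q a j l * (/ q ^ l - a * q ^ j)).
    + apply PL_mul. auto.
    + intros l. unfold fj. simpl. assert (q ^ l <> 0) by (apply pow_nonzero; lra). field. auto.
Qed.

Definition aa q alpha := Rpower q (alpha + 1).
Definition mu q alpha s := qpoch (aa q alpha) q s * Rpower q (- binom2 (s + 1) - alpha * INR s).
Definition Bm q alpha m l := q ^ (m * l) * qpoch (/ q ^ m) q l *
   Rpower q (alpha * INR l + binom2 (l + 1)) / (qpoch q q l * qpoch (aa q alpha) q l).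
Definition Dm q alpha m := qpoch (aa q alpha) q m * q ^ m / qpoch q q m.
Definition cj q alpha j := Rpower q (- binom2 (j + 1) - alpha * INR j).

Lemma aa_bounds q alpha : 0 < q -> q < 1 -> -1 < alpha -> 0 < aa q alpha < 1.
Proof.
  intros H0 H1 H2. unfold aa, Rpower. split; [apply exp_pos|].
  assert (ln q < 0) by (rewrite <- ln_1; apply ln_increasing; lra).
  assert (E : exp ((alpha + 1) * ln q) < exp 0) by (apply exp_increasing; nra).
  rewrite exp_0 in E. exact E.
Qed.

Lemma Amat_mu q alpha j k : Amat q alpha j k = mu q alpha (j + k).
Proof. reflexivity. Qed.

Lemma gamma_eq q alpha n j k : 0 < q -> q < 1 -> -1 < alpha ->
  gamma q alpha n j k = sum_f_R0 (fun m => Dm q alpha m * Bm q alpha m j * Bm q alpha m k) n.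
Proof.
  intros H0 H1 H2. unfold gamma. apply sum_eq. intros m _.
  unfold Dm, Bm. fold (aa q alpha).
  destruct (aa_bounds q alpha H0 H1 H2) as [Ha0 Ha1].
  assert (Q1 : 0 < qpoch q q m) by (apply qpoch_pos; lra).
  assert (Q2 : 0 < qpoch q q j) by (apply qpoch_pos; lra).
  assert (Q3 : 0 < qpoch q q k) by (apply qpoch_pos; lra).
  assert (Q4 : 0 < qpoch (aa q alpha) q j) by (apply qpoch_pos; lra).
  assert (Q5 : 0 < qpoch (aa q alpha) q k) by (apply qpoch_pos; lra).
  assert (Q6 : 0 < qpoch (aa q alpha) q m) by (apply qpoch_pos; lra).
  replace (m * (j + k + 1))%nat with (m + m * j + m * k)%nat by nia.
  rewrite !pow_add.
  replace (alpha * INR (j + k) + binom2 (j + 1) + binom2 (k + 1)) with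
    ((alpha * INR j + binom2 (j + 1)) + (alpha * INR k + binom2 (k + 1)))
    by (rewrite plus_INR; ring).
  rewrite Rpower_plus.
  field. lra.
Qed.

Lemma inv_pow_Rpower q l j : 0 < q -> (/ q ^ l) ^ j = Rpower q (- (INR l * INR j)).
Proof.
  intros H. rewrite Rpower_Ropp, <- mult_INR, Rpower_pow by auto.
  rewrite pow_mult, pow_inv. reflexivity.
Qed.

Lemma muB q alpha j m l : 0 < q -> q < 1 -> -1 < alpha ->
  mu q alpha (j + l) * Bm q alpha m l = w q m l * (cj q alpha j * fj q (aa q alpha) j l).
Proof.
  intros H0 H1 H2. unfold mu, Bm, w, cj, fj.
  destruct (aa_bounds q alpha H0 H1 H2) as [Ha0 Ha1].
  assert (Q2 : 0 < qpoch q q l) by (apply qpoch_pos; lra).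
  assert (Q4 : 0 < qpoch (aa q alpha) q l) by (apply qpoch_pos; lra).
  rewrite Nat.add_comm, qpoch_add.
  rewrite inv_pow_Rpower by auto.
  assert (E : Rpower q (- binom2 (l + j + 1) - alpha * INR (l + j)) *
              Rpower q (alpha * INR l + binom2 (l + 1)) =
              Rpower q (- binom2 (j + 1) - alpha * INR j) * Rpower q (- (INR l * INR j))).
  { rewrite <- !Rpower_plus. f_equal. unfold binom2. rewrite !plus_INR. simpl. field. }
  replace (qpoch (aa q alpha) q l * qpoch (aa q alpha * q ^ l) q j *
    Rpower q (- binom2 (l + j + 1) - alpha * INR (l + j)) *
    (q ^ (m * l) * qpoch (/ q ^ m) q l * Rpower q (alpha * INR l + binom2 (l + 1)) /
    (qpoch q q l * qpoch (aa q alpha) q l)))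
   with (qpoch (aa q alpha * q ^ l) q j * q ^ (m * l) * qpoch (/ q ^ m) q l / qpoch q q l *
    (Rpower q (- binom2 (l + j + 1) - alpha * INR (l + j)) *
              Rpower q (alpha * INR l + binom2 (l + 1)))) by (field; lra).
  rewrite E. field. lra.
Qed.

Lemma idm_sym j k : idm j k = idm k j.
Proof. unfold idm. rewrite Nat.eqb_sym. reflexivity. Qed.

Lemma idm_ne j k : j <> k -> idm j k = 0.
Proof. intros H. unfold idm. destruct (Nat.eqb_spec j k); [contradiction|reflexivity]. Qed.

Lemma idm_eq j : idm j j = 1.
Proof. unfold idm. rewrite Nat.eqb_refl. reflexivity. Qed.

Lemma tri n (B X : nat -> nat -> R) :
  (forall p l, (p < l)%nat -> B p l = 0) -> (forall p, (p <= n)%nat -> B p p <> 0) ->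
  (forall p k, (p <= n)%nat -> (k <= n)%nat -> sum_f_R0 (fun j => B p j * X j k) n = B p k) ->
  forall j k, (j <= n)%nat -> (k <= n)%nat -> X j k = idm j k.
Proof.
  intros HB Hd HS.
  assert (G : forall N j k, (j < N)%nat -> (j <= n)%nat -> (k <= n)%nat -> X j k = idm j k).
  { induction N; intros p k Hp Hpn Hk; [lia|].
    assert (E1 : sum_f_R0 (fun j => B p j * idm j k) n = B p k).
    { rewrite (sum_single _ n k) by (auto; intros; rewrite idm_ne by auto; ring).
      rewrite idm_eq. ring. }
    assert (E2 : sum_f_R0 (fun j => B p j * (X j k - idm j k)) n = B p p * (X p k - idm p k)).
    { apply (sum_single (fun j => B p j * (X j k - idm j k))); auto. intros i Hi Hne.
      destruct (Nat.lt_ge_cases p i).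
      - rewrite HB by auto. ring.
      - rewrite (IHN i k) by lia. ring. }
    assert (E3 : sum_f_R0 (fun j => B p j * (X j k - idm j k)) n = 0).
    { rewrite (sum_eq _ (fun j => B p j * X j k - B p j * idm j k)) by (intros; ring).
      rewrite minus_sum, E1, HS by auto. ring. }
    rewrite E3 in E2. specialize (Hd p Hpn).
    assert (X p k - idm p k = 0).
    { apply (Rmult_eq_reg_l (B p p)); auto. rewrite <- E2. ring. }
    lra. }
  intros j k Hj Hk. apply (G (S j)); auto.
Qed.

Lemma L1 q m : 0 < q -> qpoch (/ q ^ m) q m = qpoch (/ q) (/ q) m.
Proof.
  intros Hq. induction m.
  - reflexivity.
  - rewrite qpoch_shift.
    replace (/ q ^ S m * q) with (/ q ^ m) by (simpl; field; split; [apply pow_nonzero|]; lra).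
    rewrite IHm. simpl. rewrite pow_inv. assert (q ^ m <> 0) by (apply pow_nonzero; lra). field. split; lra.
Qed.

Lemma L2 q m : 0 < q -> (qpoch (/ q) (/ q) m) ^ 2 * q ^ (m * S m) = (qpoch q q m) ^ 2.
Proof.
  intros Hq. induction m.
  - simpl. ring.
  - replace (S m * S (S m))%nat with (m * S m + (S m + S m))%nat by nia.
    rewrite !pow_add. simpl qpoch.
    rewrite pow_inv.
    assert (q ^ m <> 0) by (apply pow_nonzero; lra).
    replace ((qpoch (/ q) (/ q) m * (1 - / q * / q ^ m)) ^ 2 * (q ^ (m * S m) * (q ^ S m * q ^ S m)))
      with ((qpoch (/ q) (/ q) m) ^ 2 * q ^ (m * S m) * ((1 - / q * / q ^ m) * q ^ S m) ^ 2) by ring.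
    rewrite IHm. simpl. field. split; lra.
Qed.

Lemma Bm_zero q alpha m l : 0 < q -> (m < l)%nat -> Bm q alpha m l = 0.
Proof.
  intros Hq H. unfold Bm. rewrite (qpoch_zero _ q l m H). unfold Rdiv. ring.
  field. apply pow_nonzero. lra.
Qed.

Lemma DBS q alpha m : 0 < q -> q < 1 -> -1 < alpha ->
  Dm q alpha m * Bm q alpha m m * (cj q alpha m * qpoch (/ q) (/ q) m) = 1.
Proof.
  intros H0 H1 H2. unfold Dm, Bm, cj. rewrite L1 by auto.
  destruct (aa_bounds q alpha H0 H1 H2) as [Ha0 Ha1].
  assert (Q1 : 0 < qpoch q q m) by (apply qpoch_pos; lra).
  assert (Q6 : 0 < qpoch (aa q alpha) q m) by (apply qpoch_pos; lra).
  assert (E : Rpower q (alpha * INR m + binom2 (m + 1)) * Rpower q (- binom2 (m + 1) - alpha * INR m) = 1).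
  { rewrite <- Rpower_plus. replace (alpha * INR m + binom2 (m + 1) + (- binom2 (m + 1) - alpha * INR m)) with 0 by ring.
    apply Rpower_O; auto. }
  assert (E2 := L2 q m H0).
  replace (m * S m)%nat with (m * m + m)%nat in E2 by nia. rewrite pow_add in E2.
  replace (qpoch (aa q alpha) q m * q ^ m / qpoch q q m *
   (q ^ (m * m) * qpoch (/ q) (/ q) m * Rpower q (alpha * INR m + binom2 (m + 1)) /
    (qpoch q q m * qpoch (aa q alpha) q m)) *
   (Rpower q (- binom2 (m + 1) - alpha * INR m) * qpoch (/ q) (/ q) m))
  with ((qpoch (/ q) (/ q) m ^ 2 * (q ^ (m * m) * q ^ m)) / (qpoch q q m) ^ 2 *
        (Rpower q (alpha * INR m + binom2 (m + 1)) * Rpower q (- binom2 (m + 1) - alpha * INR m)))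
  by (field; lra).
  rewrite E, E2. field. lra.
Qed.

Lemma Bm_diag_ne q alpha m : 0 < q -> q < 1 -> -1 < alpha -> Bm q alpha m m <> 0.
Proof.
  intros H0 H1 H2 H. assert (E := DBS q alpha m H0 H1 H2). rewrite H in E. lra.
Qed.

Definition SS q alpha n j m := sum_f_R0 (fun l => mu q alpha (j + l) * Bm q alpha m l) n.

Lemma SS_val q alpha n j m : 0 < q -> q < 1 -> -1 < alpha -> (m <= n)%nat ->
  SS q alpha n j m = cj q alpha j * Sig q m (fj q (aa q alpha) j).
Proof.
  intros H0 H1 H2 Hm. unfold SS, Sig.
  rewrite (sum_eq _ (fun l => w q m l * (cj q alpha j * fj q (aa q alpha) j l)))
    by (intros; apply muB; auto).
  rewrite (sum_trunc _ n m) by (auto; intros; rewrite w_zero by (lra || lia); ring).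
  rewrite sum_mult_l. apply sum_eq. intros; ring.
Qed.

Lemma SS_low q alpha n j m : 0 < q -> q < 1 -> -1 < alpha -> (j < m)%nat -> (m <= n)%nat ->
  SS q alpha n j m = 0.
Proof.
  intros H0 H1 H2 Hj Hm. rewrite SS_val by auto.
  rewrite (Sig_zero q j m 1); auto. ring. apply fj_PL; auto.
Qed.

Lemma SS_diag q alpha n m : 0 < q -> q < 1 -> -1 < alpha -> (m <= n)%nat ->
  SS q alpha n m m = cj q alpha m * qpoch (/ q) (/ q) m.
Proof.
  intros H0 H1 H2 Hm. rewrite SS_val by auto.
  rewrite (Sig_val q m 1); auto. ring. apply fj_PL; auto.
Qed.

Definition YY q alpha n p m := sum_f_R0 (fun j => Bm q alpha p j * SS q alpha n j m) n.

Lemma YY_sym q alpha n p m : YY q alpha n p m = YY q alpha n m p.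
Proof.
  unfold YY, SS.
  rewrite (sum_eq _ (fun j => sum_f_R0 (fun l => Bm q alpha p j * mu q alpha (j + l) * Bm q alpha m l) n))
    by (intros; rewrite sum_mult_l; apply sum_eq; intros; ring).
  rewrite (sum_eq (fun j => Bm q alpha m j * _) (fun j => sum_f_R0 (fun l => Bm q alpha m j * mu q alpha (j + l) * Bm q alpha p l) n))
    by (intros; rewrite sum_mult_l; apply sum_eq; intros; ring).
  rewrite (sum_swap (fun j l => Bm q alpha m j * mu q alpha (j + l) * Bm q alpha p l)).
  apply sum_eq; intros j _. apply sum_eq; intros l _. rewrite Nat.add_comm. ring.
Qed.

Lemma YY_low q alpha n p m : 0 < q -> q < 1 -> -1 < alpha -> (p < m)%nat -> (m <= n)%nat ->
  YY q alpha n p m = 0.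
Proof.
  intros H0 H1 H2 Hp Hm. unfold YY. apply sum_zero. intros j Hj.
  destruct (Nat.lt_ge_cases p j).
  - rewrite Bm_zero by auto. ring.
  - rewrite SS_low by (auto; lia). ring.
Qed.

Lemma YY_val q alpha n p m : 0 < q -> q < 1 -> -1 < alpha -> (p <= n)%nat -> (m <= n)%nat ->
  Dm q alpha m * YY q alpha n p m = idm p m.
Proof.
  intros H0 H1 H2 Hp Hm.
  destruct (Nat.lt_trichotomy p m) as [H|[H|H]].
  - rewrite YY_low by auto. rewrite idm_ne by lia. ring.
  - subst p. rewrite idm_eq. unfold YY.
    rewrite (sum_single _ n m); [| auto | intros i Hi Hne;
      destruct (Nat.lt_ge_cases m i);
      [rewrite Bm_zero by auto; ring | rewrite SS_low by (auto; lia); ring]].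
    rewrite SS_diag by auto. rewrite <- (DBS q alpha m H0 H1 H2). ring.
  - rewrite YY_sym, YY_low by auto. rewrite idm_ne by lia. ring.
Qed.

Lemma Dm_ne q alpha m : 0 < q -> q < 1 -> -1 < alpha -> Dm q alpha m <> 0.
Proof.
  intros H0 H1 H2 H. assert (E := DBS q alpha m H0 H1 H2). rewrite H in E. lra.
Qed.

Theorem mainTheorem9 (q alpha : R) (n : nat) :
  0 < q -> q < 1 -> -1 < alpha ->
  forall j k : nat, (j <= n)%nat -> (k <= n)%nat ->
    matmul n (Amat q alpha) (gamma q alpha n) j k = idm j k /\
    matmul n (gamma q alpha n) (Amat q alpha) j k = idm j k.
Proof.
  intros H0 H1 H2.
  assert (X1 : forall j k, matmul n (Amat q alpha) (gamma q alpha n) j k =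
     sum_f_R0 (fun m => Dm q alpha m * Bm q alpha m k * SS q alpha n j m) n).
  { intros j k. unfold matmul, SS.
    rewrite (sum_eq _ (fun l => sum_f_R0 (fun m => mu q alpha (j + l) * (Dm q alpha m * Bm q alpha m l * Bm q alpha m k)) n))
      by (intros; rewrite Amat_mu, gamma_eq by auto; apply sum_mult_l).
    rewrite (sum_swap (fun l m => mu q alpha (j + l) * (Dm q alpha m * Bm q alpha m l * Bm q alpha m k))).
    apply sum_eq. intros m _. rewrite sum_mult_l. apply sum_eq; intros; ring. }
  assert (HX : forall j k, (j <= n)%nat -> (k <= n)%nat ->
     matmul n (Amat q alpha) (gamma q alpha n) j k = idm j k).
  { apply (tri n (Bm q alpha)).
    - intros; apply Bm_zero; auto.
    - intros; apply Bm_diag_ne; auto.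
    - intros p k Hp Hk.
      rewrite (sum_eq _ (fun j => sum_f_R0 (fun m => Bm q alpha p j * (Dm q alpha m * Bm q alpha m k * SS q alpha n j m)) n))
        by (intros; rewrite X1; apply sum_mult_l).
      rewrite (sum_swap (fun j m => Bm q alpha p j * (Dm q alpha m * Bm q alpha m k * SS q alpha n j m))).
      rewrite (sum_eq _ (fun m => Bm q alpha m k * (Dm q alpha m * YY q alpha n p m))).
      2:{ intros m Hm. unfold YY. rewrite !sum_mult_l. apply sum_eq; intros; ring. }
      rewrite (sum_single _ n p); auto.
      + rewrite YY_val, idm_eq by auto. ring.
      + intros i Hi Hne. rewrite YY_val by auto. rewrite idm_ne by auto. ring. }
  intros j k Hj Hk. split; [apply HX; auto|].
  rewrite idm_sym, <- (HX k j Hk Hj). unfold matmul.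
  apply sum_eq. intros l _. rewrite !Amat_mu, !gamma_eq by auto.
  rewrite Nat.add_comm. rewrite Rmult_comm. f_equal. apply sum_eq; intros; ring.
Qed.
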